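(* Let $\overline{\mathcal{O}}$, $\varphi$ be as in the context, let $K$ be a complete non-Archimedean field, and let $F:\overline{\mathcal{O}}\to K$ be a continuous non-vanishing function. Suppose that for all $n\in\mathbb{N}$ and all $\mathbf{x}=(\mathbf{x}_t)_t\in\overline{\mathcal{O}}$ with $|\mathbf{x}_t|<1$ for all $t$, $$\varphi^{(n)}(\mathbf{x})=\mathbf{x}\ \Longrightarrow\ \prod_{j=0}^{n-1}F\left(\varphi^{(j)}(\mathbf{x})\right)=1.$$ Then there exists a continuous non-vanishing function $G:\overline{\mathcal{O}}\to K$ such that $F(\mathbf{x})=\dfrac{G(\mathbf{x})}{G(\varphi(\mathbf{x}))}$ for all $\mathbf{x}\in\overline{\mathcal{O}}$.
   Context: Let $q$ be a prime power, $A=\mathbb{F}_q[\theta]$, $k=\mathbb{F}_q(\theta)$. Let $\mathcal{O}=\prod_t\mathcal{O}_t$ be a finite product with each $\mathcal{O}_t\in\{\mathbb{Z},A\}$; for each $t$ fix a prime number $p_t$ (if $\mathcal{O}_t=\mathbb{Z}$, with $\overline{\mathcal{O}}_t=\mathbb{Z}_{p_t}$) or a monic irreducible $v_t\in A$ (if $\mathcal{O}_t=A$, with $\overline{\mathcal{O}}_t=A_{v_t}$ the $v_t$-adic completion), and $\overline{\mathcal{O}}=\prod_t\overline{\mathcal{O}}_t$. Fix $\pi_t$ a positive power of $p_t$ resp. $v_t$. Each $\mathbf{x}_t\in\overline{\mathcal{O}}_t$ is uniquely $\sum_{i\ge0}x_{t,i}\pi_t^i$ with integer digits $0\le x_{t,i}<\pi_t$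 (case $\mathbb{Z}$) or polynomial digits of degree $<\deg\pi_t$ (case $A$); $\varphi_t(\mathbf{x}_t)=\sum_{i\ge0}x_{t,i+1}\pi_t^i$ and $\varphi(\mathbf{x})=(\varphi_t(\mathbf{x}_t))_t$; $\varphi^{(j)}$ is the $j$-fold iterate. If $\varphi^{(n)}(\mathbf{x})=\mathbf{x}$ then each component $\mathbf{x}_t$ is an element of $\mathbb{Q}$ resp. $k$ (a ratio of an element of $\mathcal{O}_t$ and $1-\pi_t^n$); here $|\cdot|$ denotes the usual real absolute value on $\mathbb{Q}$ and the $\infty$-adic absolute value $|f/g|=q^{\deg f-\deg g}$ on $k$. *)

(* Defs.v *)
From HB Require Import structures.
From mathcomp Require Import all_boot all_order all_algebra.
From mathcomp Require Import reals.
Set Implicit Arguments.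
Unset Strict Implicit.
Unset Printing Implicit Defensive.
Import Order.TTheory GRing.Theory Num.Theory.
Local Open Scope ring_scope.

Definition nonarch_abs (R : realType) (K : fieldType) (abs : K -> R) : Prop :=
  [/\ forall x, 0 <= abs x,
      forall x, abs x = 0 <-> x = 0,
      forall x y, abs (x * y) = abs x * abs y
    & forall x y, abs (x + y) <= Num.max (abs x) (abs y)].

Definition abs_complete (R : realType) (K : fieldType) (abs : K -> R) : Prop :=
  forall u : nat -> K,
    (forall eps : R, 0 < eps -> exists N, forall i j, (N <= i)%N -> (N <= j)%N ->
        abs (u i - u j) < eps) ->
    exists l : K, forall eps : R, 0 < eps -> exists N, forall i, (N <= i)%N ->
        abs (u i - l) < eps.

(* The data O = prod_t O_t, O_t in {Z, A}, A = F_q[theta] with F a      *)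
(* finite field of size q.  For each t: isZ t = true means O_t = Z      *)
(* with prime pZ t, and pi_t = pZ t ^ ex t; isZ t = false means         *)
(* O_t = A with monic irreducible vA t, pi_t = vA t ^ ex t.             *)
Record setup (F : finFieldType) := Setup {
  ncomp : nat;
  isZ : 'I_ncomp -> bool;
  pZ : 'I_ncomp -> nat;
  vA : 'I_ncomp -> {poly F};
  ex : 'I_ncomp -> nat }.
Arguments ncomp {F} s.
Arguments isZ {F} s t.
Arguments pZ {F} s t.
Arguments vA {F} s t.
Arguments ex {F} s t.

Definition valid_setup (F : finFieldType) (S : setup F) : Prop :=
  [/\ forall t, isZ S t -> prime (pZ S t),
      forall t, ~~ isZ S t -> vA S t \is monic /\ irreducible_poly (vA S t)
    & forall t, (0 < ex S t)%N].

Definition piZ (F : finFieldType) (S : setup F) (t : 'I_(ncomp S)) : nat :=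
  (pZ S t ^ ex S t)%N.
Definition piA (F : finFieldType) (S : setup F) (t : 'I_(ncomp S)) : {poly F} :=
  vA S t ^+ ex S t.
Arguments piZ {F} S t.
Arguments piA {F} S t.

(* Digits of the pi_t-adic expansion: integers 0 <= d < pi_t (case Z),  *)
(* polynomials of degree < deg pi_t (case A).                           *)
Definition digit (F : finFieldType) (S : setup F) (t : 'I_(ncomp S)) : Type :=
  if isZ S t then 'I_(piZ S t)
  else {a : {poly F} | (size a < size (piA S t))%N}.
Arguments digit {F} S t.

(* An element x_t of Obar_t = Z_{p_t} resp. A_{v_t} is identified with its  *)
(* (unique) digit sequence x_t = sum_i x_{t,i} pi_t^i; Obar = prod_t Obar_t. *)
Definition Obar (F : finFieldType) (S : setup F) : Type :=
  forall t : 'I_(ncomp S), nat -> digit S t.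

Definition phi (F : finFieldType) (S : setup F) (x : Obar S) : Obar S :=
  fun t i => x t i.+1.

(* Continuity for the (pi-adic = product) topology on Obar: the cylinder *)
(* sets {y | y_{t,i} = x_{t,i} for all t and i < N} form a neighbourhood *)
(* base of x.                                                           *)
Definition continuousK (F : finFieldType) (S : setup F) (R : realType)
    (K : fieldType) (abs : K -> R) (f : Obar S -> K) : Prop :=
  forall x : Obar S, forall eps : R, 0 < eps -> exists N : nat,
    forall y : Obar S, (forall t i, (i < N)%N -> y t i = x t i) ->
      abs (f y - f x) < eps.

(* The infinity-adic absolute value |f/g| = q^(deg f - deg g) on k,     *)
(* for g <> 0 (and |0| = 0), with q = #|F|.                              *)
Definition absinf (F : finFieldType) (f g : {poly F}) : rat :=
  if f == 0 then 0
  else (#|F|%:R : rat) ^ ((size f)%:Z - (size g)%:Z).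

(* For x with phi^(n) x = x (n >= 1): x_t = a / (1 - pi_t^n) where      *)
(* a = sum_{i<n} x_{t,i} pi_t^i; `small S x n t` says |x_t| < 1 (real   *)
(* absolute value on Q, resp. infinity-adic absolute value on k).       *)
Definition small (F : finFieldType) (S : setup F) (x : Obar S) (n : nat)
    (t : 'I_(ncomp S)) : Prop :=
  (if isZ S t as b return
      (nat -> if b then 'I_(piZ S t)
              else {a : {poly F} | (size a < size (piA S t))%N}) -> Prop
   then fun d =>
     `| (\sum_(i < n) ((d i : nat)%:R * (piZ S t ^ i)%:R))
          / (1 - (piZ S t ^ n)%:R) : rat | < 1
   else fun d =>
     absinf (\sum_(i < n) sval (d i) * piA S t ^+ i) (1 - piA S t ^+ n) < 1)
  (x t).

(* Main.v *)
Require Import Defs.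
From HB Require Import structures.
From mathcomp Require Import all_boot all_order all_algebra.
From mathcomp Require Import reals.
From mathcomp Require Import zify ring lra.
From Stdlib Require Import FunctionalExtensionality ClassicalEpsilon.
Import Order.TTheory GRing.Theory Num.Theory.
Local Open Scope ring_scope.

Lemma sum_digits_lt (p n : nat) (d : nat -> nat) :
  (forall i, d i < p)%N -> (\sum_(i < n) d i * p ^ i < p ^ n)%N.
Proof.
move=> hd; elim: n => [|n IH]; first by rewrite big_ord0 expn0.
rewrite big_ord_recr /= expnS.
have hp : (0 < p)%N by apply: leq_ltn_trans (hd 0%N).
have h1 : (d n * p ^ n <= (p.-1) * p ^ n)%N.
  by rewrite leq_mul2r; apply/orP; right; rewrite -ltnS prednK //; apply: hd.
apply: (@leq_trans ((p.-1).+1 * p ^ n)); last by rewrite prednK.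
by rewrite mulSn -addSn; apply: leq_add.
Qed.

Lemma sum_digits_lt0 (p n : nat) (d : nat -> nat) :
  (forall i, d i < p)%N -> d 0%N = 0%N -> (0 < n)%N -> (1 < p)%N ->
  (\sum_(i < n) d i * p ^ i < p ^ n - 1)%N.
Proof.
move=> hd h0; case: n => // n _ hp.
rewrite big_ord_recl /= h0 mul0n add0n.
have -> : (\sum_(i < n) d (bump 0 i) * p ^ bump 0 i = p * \sum_(i < n) d i.+1 * p ^ i)%N.
  rewrite big_distrr /=; apply: eq_bigr => i _.
  by rewrite /bump /= add1n expnS mulnCA.
have := @sum_digits_lt p n (fun i => d i.+1) (fun i => hd i.+1).
move: (\sum_(i < n) d i.+1 * p ^ i)%N => s hs.
rewrite expnS.
have : (p * s <= p * (p ^ n - 1))%N by rewrite leq_mul2l; apply/orP; right; rewrite -ltnS subn1 prednK ?expn_gt0 ?(ltnW hp).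
rewrite mulnBr muln1 => h.
apply: leq_ltn_trans h _.
have : (p <= p * p ^ n)%N by rewrite leq_pmulr // expn_gt0 (ltnW hp).
lia.
Qed.

Definition smallD (Fq : finFieldType) (S : setup Fq) (t : 'I_(ncomp S))
   (d : nat -> digit S t) (n : nat) : Prop :=
  (if isZ S t as b return
      (nat -> if b then 'I_(piZ S t)
              else {a : {poly Fq} | (size a < size (piA S t))%N}) -> Prop
   then fun d =>
     `| (\sum_(i < n) ((d i : nat)%:R * (piZ S t ^ i)%:R))
          / (1 - (piZ S t ^ n)%:R) : rat | < 1
   else fun d =>
     absinf (\sum_(i < n) sval (d i) * piA S t ^+ i) (1 - piA S t ^+ n) < 1) d.
Arguments smallD {Fq S t}.

Lemma small_smallD (Fq : finFieldType) (S : setup Fq) (q : Obar S) n t :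
  smallD (q t) n -> small q n t.
Proof. by []. Qed.

Lemma zd_ok (Fq : finFieldType) (S : setup Fq) (hv : valid_setup S) (t : 'I_(ncomp S)) :
  { z : digit S t | forall (d : nat -> digit S t) n, (0 < n)%N -> d 0%N = z -> smallD d n }.
Proof.
rewrite /smallD /digit.
case: hv => hZ hA hex.
case E: (isZ S t).
  have hp1 : (1 < piZ S t)%N.
    rewrite /piZ; have := prime_gt1 (hZ t E); have := hex t.
    case: (ex S t) => // e _; rewrite expnS => h1.
    have := expn_gt0 (pZ S t) e; rewrite (ltnW h1) /=; nia.
  exists (Ordinal (ltnW hp1)) => d n n0 hd0.
  pose s := (\sum_(i < n) (d i : nat) * piZ S t ^ i)%N.
  have hs : (s < piZ S t ^ n - 1)%N.
    apply: (@sum_digits_lt0 _ n (fun i => (d i : nat))); [by move=> i; apply: ltn_ord| by rewrite hd0 | by [] | by []].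
  have -> : \sum_(i < n) ((d i : nat)%:R * (piZ S t ^ i)%:R) = (s%:R : rat).
    by rewrite natr_sum; apply: eq_bigr => i _; rewrite natrM.
  have hP : (1 < piZ S t ^ n)%N.
    move: hs; case: (piZ S t ^ n)%N => [|[|k]] //.
  have hs' : (s.+2 <= piZ S t ^ n)%N by lia.
  have h1 : ((s%:R : rat) + 2 <= (piZ S t ^ n)%:R).
    by rewrite -[2]/(2%:R : rat) -natrD ler_nat addn2.
  move: h1 (ler0n rat s).
  move: (s%:R : rat) ((piZ S t ^ n)%:R : rat) => a b h1 h2.
  rewrite normf_div ger0_norm // ler0_norm; last by lra.
  rewrite ltr_pdivrMr; lra.
have [hmon hirr] : vA S t \is monic /\ irreducible_poly (vA S t) by apply: hA; rewrite E.
have hPm : piA S t \is monic by apply: monic_exp.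
have hsv : (1 < size (vA S t))%N := hirr.1.
have hsz : forall i, size (piA S t ^+ i) = ((size (piA S t)).-1 * i).+1.
  move=> i; rewrite -(size_exp (piA S t) i) prednK // lt0n size_poly_eq0.
  exact/monic_neq0/monic_exp.
have hsP : (1 < size (piA S t))%N.
  have := size_exp (vA S t) (ex S t); rewrite -/(piA S t) => h.
  have hP0 : piA S t != 0 by apply: monic_neq0.
  have := hex t; move: h; rewrite -(size_poly_eq0 (piA S t)) in hP0.
  move: hP0; case: (size (piA S t)) => // k _ /= ->.
  case: (ex S t) => // e _; move: hsv; case: (size (vA S t)) => // [[|j]] //= _.
have hs0 : (size (0%R : {poly Fq}) < size (piA S t))%N by rewrite size_poly0 ltnW.
exists (exist _ 0 hs0) => d n n0 _.
set m := (size (piA S t)).-1.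
have hm : (0 < m)%N by rewrite /m -ltnS prednK // ltnW.
set f := \sum_(i < n) _.
have hf : (size f <= m * n)%N.
  apply: leq_trans (size_sum _ _ _) _; apply/bigmax_leqP => i _.
  apply: leq_trans (size_polyMleq _ _) _.
  rewrite hsz addnS /=.
  have hdi : (size (sval (d i)) <= m)%N.
    by rewrite /m -ltnS prednK ?(ltnW hsP) //; exact: (proj2_sig (d i)).
  have : (i < n)%N := ltn_ord i.
  move: (size (sval (d i))) hdi => a ha hi.
  apply: (@leq_trans (m * i.+1)); first by rewrite mulnS -/m; lia.
  by rewrite leq_mul2l hi orbT.
have hg : size (1 - piA S t ^+ n) = (m * n).+1.
  rewrite addrC size_polyDl; rewrite (size_polyN (piA S t ^+ n)) hsz //.
  by rewrite -/m size_poly1 ltnS muln_gt0 hm n0.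
rewrite /absinf; case: ifP => // _.
rewrite hg.
have -> : ((size f)%:Z - (m * n).+1%:Z = Negz (m * n - size f))%R.
  rewrite NegzE; lia.
have hq : (1 < (#|Fq|%:R : rat)) by rewrite ltr1n card_finNzRing_gt1.
rewrite /exprz invf_lt1; last by rewrite exprn_gt0 // (lt_trans ltr01).
by rewrite exprn_egt1.
Qed.

Set Implicit Arguments.
Unset Strict Implicit.
Unset Printing Implicit Defensive.

Section AbsLemmas.
Variables (R : realType) (K : fieldType) (abs : K -> R).
Hypothesis habs : nonarch_abs abs.

Lemma abs_ge0 x : 0 <= abs x. Proof. by case: habs. Qed.
Lemma abs_eq0 x : abs x = 0 <-> x = 0. Proof. by case: habs. Qed.
Lemma absM x y : abs (x * y) = abs x * abs y. Proof. by case: habs. Qed.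
Lemma absD x y : abs (x + y) <= Num.max (abs x) (abs y). Proof. by case: habs. Qed.

Lemma abs_gt0 x : x != 0 -> 0 < abs x.
Proof.
move=> hx; rewrite lt_def abs_ge0 andbT; apply/eqP => h.
by move/abs_eq0: h => /eqP; rewrite (negbTE hx).
Qed.

Lemma abs1 : abs 1 = 1.
Proof.
have h := absM 1 1; rewrite mulr1 in h.
have h0 : abs 1 != 0 by apply/eqP => /abs_eq0 /eqP; rewrite oner_eq0.
by apply: (mulfI h0); rewrite -h mulr1.
Qed.

Lemma absN x : abs (- x) = abs x.
Proof.
have h := absM (-1) (-1); rewrite mulrNN mulr1 abs1 in h.
have hN : abs (-1) = 1.
  have h0 := abs_ge0 (-1).
  have : (abs (-1) - 1) * (abs (-1) + 1) = 0 by rewrite mulrDr mulrBl -h; ring.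
  move/eqP; rewrite mulf_eq0 => /orP [|]; rewrite ?subr_eq0 => /eqP //.
  by move=> h1; lra.
by rewrite -mulN1r absM hN mul1r.
Qed.

Lemma absB x y : abs (x - y) = abs (y - x).
Proof. by rewrite -absN opprB. Qed.

Lemma abs_eq_of_lt a b : abs (a - b) < abs b -> abs a = abs b.
Proof.
move=> h; apply/eqP; rewrite eq_le; apply/andP; split.
  have := absD (a - b) b; rewrite subrK => h1.
  apply: (le_trans h1); rewrite ge_max lexx andbT; exact: ltW.
have := absD (b - a) a; rewrite subrK => h1.
move: h1; rewrite absB le_max => /orP [h3|//].
by move: (lt_le_trans h h3); rewrite ltxx.
Qed.

Lemma absV x : abs (x^-1) = (abs x)^-1.
Proof.
have [->|hx] := eqVneq x 0.
  by rewrite invr0 (proj2 (abs_eq0 0) erefl) invr0.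
have h := absM x x^-1; rewrite mulfV // abs1 in h.
have hx' := abs_gt0 hx.
by apply: (mulfI (lt0r_neq0 hx')); rewrite -h mulfV // lt0r_neq0.
Qed.

Definition cl (e : R) (a : K) := abs (a - 1) < e.

Lemma cl_abs e a : e <= 1 -> cl e a -> abs a = 1.
Proof. by move=> he h; rewrite -abs1; apply: abs_eq_of_lt; rewrite abs1; apply: lt_le_trans h he. Qed.

Lemma cl_neq0 e a : e <= 1 -> cl e a -> a != 0.
Proof. by move=> he h; apply/eqP => a0; have := cl_abs he h; rewrite a0 (proj2 (abs_eq0 0) erefl) => /eqP; rewrite eq_sym oner_eq0. Qed.

Lemma cl1 e : 0 < e -> cl e 1.
Proof. by rewrite /cl subrr (proj2 (abs_eq0 0) erefl). Qed.

Lemma clM e a b : e <= 1 -> cl e a -> cl e b -> cl e (a * b).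
Proof.
move=> he ha hb; rewrite /cl.
have -> : a * b - 1 = a * (b - 1) + (a - 1) by ring.
apply: (le_lt_trans (absD _ _)); rewrite gt_max absM (cl_abs he ha) mul1r.
  by apply/andP; split.
Qed.

Lemma clV e a : e <= 1 -> cl e a -> cl e a^-1.
Proof.
move=> he ha; have a0 := cl_neq0 he ha; rewrite /cl.
have -> : a^-1 - 1 = a^-1 * (1 - a) by rewrite mulrBr mulr1 mulVf.
by rewrite absM absV (cl_abs he ha) invr1 mul1r absB.
Qed.

Lemma cl_div e a b : e <= 1 -> cl e a -> cl e b -> cl e (a / b).
Proof. by move=> he ha hb; apply: clM => //; apply: clV. Qed.

Lemma cl_prod e n (f : 'I_n -> K) : 0 < e -> e <= 1 -> (forall i, cl e (f i)) ->
  cl e (\prod_(i < n) f i).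
Proof.
move=> e0 he hf; apply: (big_ind (cl e)); first exact: cl1.
  by move=> x y; apply: clM.
by move=> i _; apply: hf.
Qed.

Lemma cl_eq a : (forall e, 0 < e -> e <= 1 -> cl e a) -> a = 1.
Proof.
move=> h; apply/eqP; rewrite -subr_eq0; apply/eqP; apply/abs_eq0.
have h0 := abs_ge0 (a - 1).
case: (ltrgt0P (abs (a - 1))) => // hp.
  have := h (Num.min (abs (a - 1)) 1); rewrite lt_min hp ltr01 ge_min lexx orbT.
  move=> /(_ erefl erefl); rewrite /cl lt_min ltxx //.
by move: (lt_le_trans hp h0); rewrite ltxx.
Qed.

Lemma abs_sub_lt (e : R) a b : abs a < e -> abs b < e -> abs (a - b) < e.
Proof. by move=> ha hb; apply: (le_lt_trans (absD _ _)); rewrite gt_max absN ha hb. Qed.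

End AbsLemmas.

Lemma fin_bound (P : nat -> nat -> Prop) K :
  (forall k N N', (N <= N')%N -> P k N -> P k N') ->
  (forall k, (k < K)%N -> exists N, P k N) -> exists N, forall k, (k < K)%N -> P k N.
Proof.
move=> hmon; elim: K => [|K IH] h; first by exists 0%N.
have [N1 h1] : exists N, forall k, (k < K)%N -> P k N.
  by apply: IH => k hk; apply: h; apply: ltnW.
have [N2 h2] := h K (ltnSn K).
exists (maxn N1 N2) => k; rewrite ltnS leq_eqVlt => /orP [/eqP ->|hk].
  by apply: hmon h2; apply: leq_maxr.
by apply: hmon (h1 k hk); apply: leq_maxl.
Qed.

Section Main.
Variables (Fq : finFieldType) (S : setup Fq) (R : realType) (K : fieldType)
  (abs : K -> R) (F : Obar S -> K) (z0 : forall t, digit S t).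
Hypothesis habs : nonarch_abs abs.
Hypothesis hcomp : abs_complete abs.
Hypothesis hcont : continuousK abs F.
Hypothesis hF0 : forall x, F x != 0.

Definition agree N (x y : Obar S) := forall t i, (i < N)%N -> y t i = x t i.
Arguments agree N%_nat_scope x y.
Definition pre k (y : Obar S) : Obar S := fun (t : 'I_(ncomp S)) (i : nat) => if (i < k)%N then z0 t else y t (i - k)%N.
Arguments pre k%_nat_scope y.
Definition zpt : Obar S := fun (t : 'I_(ncomp S)) (i : nat) => z0 t.
Definition per L m (y : Obar S) : Obar S :=
  fun (t : 'I_(ncomp S)) (i : nat) => if (i %% (L + m) < L)%N then z0 t else y t (i %% (L + m) - L)%N.
Arguments per (L m)%_nat_scope y.
Definition u L y := \prod_(j < L) F (pre (L - j) y).
Arguments u L%_nat_scope y.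
Notation ph := (@phi Fq S).

Hypothesis horbit : forall y L m, (0 < L)%N ->
  \prod_(j < L + m) F (iter j ph (per L m y)) = 1.

Lemma iterE j (x : Obar S) t i : iter j ph x t i = x t (i + j)%N.
Proof.
elim: j i => [|j IH] i; first by rewrite addn0.
by rewrite iterS /phi IH addSnnS.
Qed.

Lemma agree_le N N' x y : (N <= N')%N -> agree N' x y -> agree N x y.
Proof. by move=> h a t i hi; apply: a; apply: leq_trans h. Qed.

Lemma agree_refl N x : agree N x x. Proof. by []. Qed.

Lemma iter_pre j L y : (j <= L)%N -> iter j ph (pre L y) = pre (L - j) y.
Proof.
move=> hj; apply: functional_extensionality_dep => t.
apply: functional_extensionality => i.
rewrite iterE /pre.
have -> : (i + j < L)%N = (i < L - j)%N by lia.
case: ifP => // _; congr (y t _); lia.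
Qed.

Lemma F_zpt : F zpt = 1.
Proof.
have := horbit zpt 0 (ltn0Sn 0); rewrite big_ord1 /=.
have -> : per 1 0 zpt = zpt.
  apply: functional_extensionality_dep => t; apply: functional_extensionality => i.
  by rewrite /per /zpt; case: ifP.
by [].
Qed.

Lemma abs_F_gt0 x : 0 < abs (F x).
Proof. exact: (abs_gt0 habs). Qed.

Lemma contF x e : 0 < e -> exists N, forall y, agree N x y -> cl abs e (F y / F x).
Proof.
move=> e0; have [N hN] := hcont x (mulr_gt0 e0 (abs_F_gt0 x)).
exists N => y hy; rewrite /cl.
have -> : F y / F x - 1 = (F y - F x) / F x by rewrite mulrBl mulfV.
rewrite (absM habs) (absV habs) ltr_pdivrMr ?abs_F_gt0 //; exact: hN.
Qed.

Lemma cont2 c e : 0 < e -> e <= 1 -> exists N, forall y y', agree N c y -> agree N c y' ->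
  cl abs e (F y / F y').
Proof.
move=> e0 e1; have [N hN] := contF c e0; exists N => y y' hy hy'.
have -> : F y / F y' = (F y / F c) / (F y' / F c) by field; rewrite ?hF0.
by apply: (cl_div habs) => //; apply: hN.
Qed.

Lemma uS L y : u L.+1 y = F (pre L.+1 y) * u L y.
Proof. by rewrite /u big_ord_recl subn0; congr (_ * _); apply: eq_bigr => i _. Qed.

Lemma u_neq0 L y : u L y != 0.
Proof. by apply/prodf_neq0 => i _. Qed.

Lemma agree_zpt_pre N k y : (N <= k)%N -> agree N zpt (pre k y).
Proof. by move=> hk t i hi; rewrite /pre /zpt ifT //; apply: leq_trans hk. Qed.

Lemma u_cauchy y e : 0 < e -> e <= 1 -> exists K0, forall L M, (K0 <= L)%N -> (L <= M)%N ->
  cl abs e (u M y / u L y).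
Proof.
move=> e0 e1; have [N hN] := cont2 zpt e0 e1.
exists N => L M hL /subnK <-; elim: (M - L)%N => [|d IH].
  by rewrite add0n mulfV ?u_neq0 //; apply: cl1.
rewrite addSn uS -mulrA; apply: (clM habs) => //.
have := hN (pre (d + L).+1 y) zpt; rewrite F_zpt divr1; apply => //.
by apply: agree_zpt_pre; lia.
Qed.

Lemma H_exists y : exists h, h != 0 /\ forall e, 0 < e -> e <= 1 ->
  exists L0, forall L, (L0 <= L)%N -> cl abs e (u L y / h).
Proof.
have [K1 hK1] := u_cauchy y ltr01 (lexx 1).
set C := abs (u K1 y).
have hC : 0 < C by apply: (abs_gt0 habs); apply: u_neq0.
have habsu : forall L, (K1 <= L)%N -> abs (u L y) = C.
  move=> L hL; have := cl_abs habs (lexx 1) (hK1 K1 L (leqnn _) hL).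
  rewrite (absM habs) (absV habs) -/C => h.
  by apply: (mulIf (invr_neq0 (lt0r_neq0 hC))); rewrite h mulfV // lt0r_neq0.
have [l hl] : exists l : K, forall eps : R, 0 < eps -> exists N, forall i, (N <= i)%N ->
    abs (u i y - l) < eps.
  apply: hcomp => eps eps0.
  set e' := Num.min 1 (eps / C).
  have e'0 : 0 < e' by rewrite lt_min ltr01 divr_gt0.
  have e'1 : e' <= 1 by rewrite ge_min lexx.
  have [K2 hK2] := u_cauchy y e'0 e'1.
  exists (maxn K1 K2) => i j hi hj.
  set N := maxn K1 K2.
  have -> : u i y - u j y = u N y * ((u i y / u N y - 1) - (u j y / u N y - 1)).
    by field; apply: u_neq0.
  rewrite (absM habs) habsu ?leq_maxl //.
  apply: (@lt_le_trans _ _ (C * e')).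
    rewrite ltr_pM2l //; apply: (abs_sub_lt habs).
      by apply: hK2 => //; apply: leq_maxr.
    by apply: hK2 => //; apply: leq_maxr.
  have h2 : e' <= eps / C by rewrite ge_min lexx orbT.
  by rewrite mulrC -ler_pdivlMr.
have habsl : abs l = C.
  have [N hN] := hl C hC.
  have hi := hN (maxn N K1) (leq_maxl _ _).
  rewrite -(habsu (maxn N K1)) ?leq_maxr //.
  by apply: (abs_eq_of_lt habs); rewrite (absB habs) habsu ?leq_maxr.
have l0 : l != 0.
  by apply/eqP => l0; move: habsl; rewrite l0 (proj2 (abs_eq0 habs 0) erefl) => h; move: hC; rewrite -h ltxx.
exists l; split => // e e0 e1.
have [N hN] := hl (e * C) (mulr_gt0 e0 hC).
exists N => L hL; rewrite /cl.
have -> : u L y / l - 1 = (u L y - l) / l by field.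
by rewrite (absM habs) (absV habs) habsl ltr_pdivrMr //; apply: hN.
Qed.

Definition H y := proj1_sig (constructive_indefinite_description _ (H_exists y)).
Lemma H_spec y : H y != 0 /\ forall e, 0 < e -> e <= 1 ->
  exists L0, forall L, (L0 <= L)%N -> cl abs e (u L y / H y).
Proof. exact: (proj2_sig (constructive_indefinite_description _ (H_exists y))). Qed.

Lemma LemA y e : 0 < e -> e <= 1 -> exists M0, forall m L q, (M0 <= m)%N ->
  agree (L + m) (pre L y) q -> cl abs e (\prod_(j < L) F (iter j ph q) / u L y).
Proof.
move=> e0 e1; have [Nz hNz] := cont2 zpt e0 e1.
have [M0 hM0] : exists N, forall k, (k < Nz)%N -> forall q', agree (k + N) (pre k y) q' ->
    cl abs e (F q' / F (pre k y)).
  apply: (@fin_bound (fun k N => forall q', agree (k + N) (pre k y) q' ->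
    cl abs e (F q' / F (pre k y)))).
    move=> k N N' hN h q' hq; apply: h; apply: agree_le hq; lia.
  move=> k _; have [N hN] := contF (pre k y) e0; exists N => q' hq.
  by apply: hN; apply: agree_le hq; lia.
exists M0 => m L q hm ha.
rewrite /u -prodf_div; apply: (cl_prod habs) => // j.
have hj := ltn_ord j.
have hag : agree ((L - j) + m) (pre (L - j) y) (iter j ph q).
  move=> t i hi; rewrite iterE ha; last by lia.
  rewrite /pre.
  have -> : (i + j < L)%N = (i < L - j)%N by lia.
  by case: ifP => // _; congr (y t _); lia.
case: (ltnP (L - j) Nz) => hk.
  by apply: hM0 => //; apply: agree_le hag; lia.
apply: hNz; last by apply: agree_zpt_pre.
move=> t i hi; rewrite hag; last by lia.
by rewrite /pre ifT //; apply: leq_trans hk.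
Qed.

Lemma H_neq0 y : H y != 0. Proof. by case: (H_spec y). Qed.

Lemma u_iter_pre L y : \prod_(j < L) F (iter j ph (pre L y)) = u L y.
Proof. by rewrite /u; apply: eq_bigr => j _; rewrite iter_pre // ltnW. Qed.

Lemma H_cont x e : 0 < e -> e <= 1 -> exists N, forall y, agree N x y -> cl abs e (H y / H x).
Proof.
move=> e0 e1; have [M0 hM0] := LemA x e0 e1.
exists M0 => y hy.
have [L1 h1] := (H_spec x).2 e e0 e1.
have [L2 h2] := (H_spec y).2 e e0 e1.
set L := maxn L1 L2.
have hq : agree (L + M0) (pre L x) (pre L y).
  move=> t i hi; rewrite /pre; case: ifP => // hiL; apply: hy; lia.
have hA := hM0 M0 L (pre L y) (leqnn _) hq; rewrite u_iter_pre in hA.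
have -> : H y / H x = (u L y / u L x) * (u L x / H x) / (u L y / H y).
  by field; rewrite ?H_neq0 ?u_neq0.
apply: (cl_div habs) => //; first apply: (clM habs) => //.
  by apply: h1; apply: leq_maxl.
by apply: h2; apply: leq_maxr.
Qed.

Lemma modn_sub a n : (n <= a)%N -> (a < n + n)%N -> (a %% n = a - n)%N.
Proof. by move=> h1 h2; rewrite -{1}(subnK h1) modnDr modn_small //; lia. Qed.

Lemma per_agree L m y : agree (L + m) (pre L y) (per L m y).
Proof. by move=> t i hi; rewrite /per /pre modn_small. Qed.

Lemma FE x : F x * H x / H (ph x) = 1.
Proof.
apply: (cl_eq habs) => e e0 e1.
have [M1 hM1] := LemA x e0 e1.
have [M2 hM2] := LemA (ph x) e0 e1.
have [Nx hNx] := contF x e0.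
set m := maxn (maxn M1 M2) Nx.
pose c (i : nat) : Obar S := fun (t : 'I_(ncomp S)) (d : nat) =>
  if (d + i < m)%N then x t (d + i.+1)%N else z0 t.
have [L0 hL0] : exists N, forall i, (i < m)%N -> forall q q', agree N (c i) q ->
    agree N (c i) q' -> cl abs e (F q / F q').
  apply: (@fin_bound (fun i N => forall q q', agree N (c i) q ->
    agree N (c i) q' -> cl abs e (F q / F q'))).
    by move=> i N N' hN h q q' hq hq'; apply: h; apply: agree_le; eassumption.
  by move=> i _; apply: cont2.
have [L1 h1] := (H_spec x).2 e e0 e1.
have [L2 h2] := (H_spec (ph x)).2 e e0 e1.
set L := maxn (maxn L0 1) (maxn L1 L2).
have hL : (0 < L)%N by rewrite /L; lia.
set P1 := per L m.+1 x.
set P2 := per L m (ph x).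
set A1 := \prod_(j < L) F (iter j ph P1).
set B1 := F (iter L ph P1).
set T1 := \prod_(i < m) F (iter (L + i.+1) ph P1).
set A2 := \prod_(j < L) F (iter j ph P2).
set T2 := \prod_(i < m) F (iter (L + i) ph P2).
have E1 : A1 * (B1 * T1) = 1.
  rewrite -(@horbit x L m.+1 hL) big_split_ord big_ord_recl /=.
  by congr (_ * (_ * _)); rewrite addn0.
have E2 : A2 * T2 = 1.
  by rewrite -(@horbit (ph x) L m hL) big_split_ord /=.
have cA1 : cl abs e (A1 / u L x).
  apply: hM1; last by apply: per_agree.
  by rewrite /m; lia.
have cA2 : cl abs e (A2 / u L (ph x)).
  apply: hM2; last by apply: per_agree.
  by rewrite /m; lia.
have cB1 : cl abs e (B1 / F x).
  apply: hNx => t i hi; rewrite iterE /P1 /per modn_small; last by rewrite /m in hi *; lia.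
  by rewrite ifN; [congr (x t _); lia | rewrite -leqNgt leq_addl].
have cT : cl abs e (T1 / T2).
  rewrite -prodf_div; apply: (cl_prod habs) => // i.
  have hi := ltn_ord i.
  apply: (hL0 i hi) => t d hd; rewrite iterE /c.
    rewrite /P1 /per.
    case: (ltnP (d + i) m) => hdi.
      rewrite modn_small; last by lia.
      by rewrite ifN; [congr (x t _); lia | lia].
    by rewrite modn_sub; [rewrite ifT //; lia | lia | lia].
  rewrite /P2 /per.
  case: (ltnP (d + i) m) => hdi.
    rewrite modn_small; last by lia.
    by rewrite ifN; [rewrite /phi; congr (x t _); lia | lia].
  by rewrite modn_sub; [rewrite ifT //; lia | lia | lia].
have cu1 : cl abs e (u L x / H x) by apply: h1; rewrite /L; lia.
have cu2 : cl abs e (u L (ph x) / H (ph x)) by apply: h2; rewrite /L; lia.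
have nzA1 : A1 != 0 by apply/prodf_neq0.
have nzA2 : A2 != 0 by apply/prodf_neq0.
have nzT1 : T1 != 0 by apply/prodf_neq0.
have nzT2 : T2 != 0 by apply/prodf_neq0.
have -> : F x * H x / H (ph x) = ((A2 / u L (ph x)) * (u L (ph x) / H (ph x))) /
    ((A1 / u L x) * (u L x / H x) * (B1 / F x) * (T1 / T2)) * ((A1 * (B1 * T1)) / (A2 * T2)).
  by field; rewrite ?H_neq0 ?u_neq0 ?hF0 ?nzA1 ?nzA2 ?nzT1 ?nzT2.
rewrite E1 E2 divr1 mulr1.
apply: (cl_div habs) => //; first by apply: (clM habs).
by apply: (clM habs) => //; apply: (clM habs) => //; apply: (clM habs).
Qed.

End Main.

Unset Implicit Arguments.
Set Strict Implicit.

Theorem mainTheorem4 (Fq : finFieldType) (S : setup Fq) (R : realType)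
    (K : fieldType) (abs : K -> R) (F : Obar S -> K) :
  valid_setup S ->
  nonarch_abs abs -> abs_complete abs ->
  continuousK abs F -> (forall x, F x != 0) ->
  (forall (n : nat) (x : Obar S), (0 < n)%N ->
     (forall t, small x n t) ->
     iter n (@phi Fq S) x = x ->
     \prod_(j < n) F (iter j (@phi Fq S) x) = 1) ->
  exists G : Obar S -> K,
    [/\ continuousK abs G, (forall x, G x != 0)
      & forall x, F x = G x / G (phi x)].
Proof.
move=> hv habs hcomp hcont hF0 hper.
pose z0 (t : 'I_(ncomp S)) := proj1_sig (@zd_ok Fq S hv t).
have horbit : forall y L m, (0 < L)%N ->
    \prod_(j < L + m) F (iter j (@phi Fq S) (per z0 L m y)) = 1.
  move=> y L m hL; apply: hper.
  - by rewrite addn_gt0 hL.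
  - move=> t; apply: small_smallD; apply: (proj2_sig (@zd_ok Fq S hv t)).
      by rewrite addn_gt0 hL.
    by rewrite /per mod0n hL.
  - apply: functional_extensionality_dep => t; apply: functional_extensionality => i.
    by rewrite iterE /per modnDr.
pose HH := H habs hcomp hcont hF0 horbit.
exists (fun x => (HH x)^-1); split.
- move=> x eps eps0.
  have hHx : 0 < abs (HH x) by apply: (abs_gt0 habs); apply: H_neq0.
  set e := Num.min 1 (eps * abs (HH x)).
  have e0 : 0 < e by rewrite lt_min ltr01 mulr_gt0.
  have e1 : e <= 1 by rewrite ge_min lexx.
  have [N hN] := H_cont habs hcomp hcont hF0 horbit x e0 e1.
  exists N => y hy; have hc := hN y hy.
  have hy0 : HH y != 0 by apply: H_neq0.
  have hx0 : HH x != 0 by apply: H_neq0.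
  have habsy : abs (HH y) = abs (HH x).
    have := cl_abs habs e1 hc; rewrite (absM habs) (absV habs) => h.
    by apply: (mulIf (invr_neq0 (lt0r_neq0 hHx))); rewrite h mulfV // lt0r_neq0.
  have -> : (HH y)^-1 - (HH x)^-1 = - (HH y / HH x - 1) / HH y.
    move: (HH y) (HH x) hy0 hx0 => a b ha hb. by field; rewrite ha hb.
  rewrite (absM habs) (absN habs) (absV habs) habsy ltr_pdivrMr //.
  apply: (lt_le_trans hc); rewrite ge_min lexx orbT //.
- by move=> x; rewrite invr_neq0 // H_neq0.
move=> x; have := FE habs hcomp hcont hF0 horbit x.
rewrite -/HH => h.
have hx0 : HH x != 0 by apply: H_neq0.
have hy0 : HH (phi x) != 0 by apply: H_neq0.
have h2 : HH (phi x) = F x * HH x.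
  move: h hy0; move: (HH (phi x)) => a h ha.
  by rewrite -[a]mul1r -h divfK.
rewrite h2; field; by rewrite hx0 hF0 oner_neq0.
Qed.
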